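(* Let $(q_l)_{l\ge1}$ be positive numbers with $q_1=1$ and $0<R:=\lim_{l\to\infty}q_l/q_{l+1}<\infty$, and assume (NEQ): $\tilde f(1)<1$, or $\tilde f(1)=1$ and $\tilde g(1)=\infty$. Let $\rho^*>0$. Then $$\inf\{\tilde A(z):\ z\in X_{0+},\ \rho(z)=\rho^*\}=0,$$ and this infimum is not attained by any $z\in X_{0+}$ with $\rho(z)=\rho^*$.
   Context: $X=\{z=(z_l)_{l\ge1}:\sum_l l|z_l|<\infty\}$, $X_{0+}$ its nonnegative elements, $\rho(z)=\sum_l lz_l$, $N(z)=\sum_l z_l$. Set $\tilde q_l=q_lR^l$, $\tilde f(\mu)=\sum_{l\ge1}\tilde q_l\mu^l$, $\tilde g(\mu)=\sum_{l\ge1}l\tilde q_l\mu^l$, $\tilde f(1)=\sum_l\tilde q_l\in(0,\infty]$, $\tilde g(1)=\sum_l l\tilde q_l\in(0,\infty]$. For $z\in X_{0+}\setminus\{0\}$, $\tilde A(z)=\sum_l z_l\ln\big(z_l/(\tilde q_lN(z))\big)$ with $0\ln0=0$, and $\tilde A(0)=0$. *)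

(* Defs.v *)
From Stdlib Require Import Reals.
From Coquelicot Require Import Coquelicot.
Open Scope R_scope.

(* Convention: sequences (z_l)_{l>=1} are functions z : nat -> R, where
   z l is z_l for l >= 1; the entry z 0 is unused.  All sums run over
   l = k+1, k = 0,1,2,... *)

Definition qt (q : nat -> R) (Rr : R) (l : nat) : R := q l * Rr ^ l.

Definition ft1 (q : nat -> R) (Rr : R) : Rbar :=
  Lim_seq (fun n => sum_n (fun k => qt q Rr (S k)) n).

Definition gt1 (q : nat -> R) (Rr : R) : Rbar :=
  Lim_seq (fun n => sum_n (fun k => INR (S k) * qt q Rr (S k)) n).

(* z in X : sum_l l |z_l| < oo  (z 0 is required to be 0, as it is not an entry) *)
Definition inX (z : nat -> R) : Prop :=
  z 0%nat = 0 /\ ex_series (fun k => INR (S k) * Rabs (z (S k))).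

Definition inX0p (z : nat -> R) : Prop :=
  inX z /\ forall l : nat, 0 <= z l.

Definition rho (z : nat -> R) : R := Series (fun k => INR (S k) * z (S k)).

Definition Nz (z : nat -> R) : R := Series (fun k => z (S k)).

Definition Aterm (q : nat -> R) (Rr : R) (z : nat -> R) (l : nat) : R :=
  if Req_EM_T (z l) 0 then 0 else z l * ln (z l / (qt q Rr l * Nz z)).

(* \tilde A(z) = sum_{l>=1} z_l ln(z_l/(\tilde q_l N(z))), valued in Rbar
   (the sum may be +oo).  For z = 0 every summand is 0, so \tilde A(0) = 0. *)
Definition Atilde (q : nat -> R) (Rr : R) (z : nat -> R) : Rbar :=
  Lim_seq (fun n => sum_n (fun k => Aterm q Rr z (S k)) n).

(* Main.v *)
Require Import Defs.
From Stdlib Require Import Reals Lra Lia Classical.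
From Coquelicot Require Import Coquelicot.
Open Scope R_scope.

Lemma sum_n_le_R (a b : nat -> R) : (forall k, a k <= b k) -> forall n, sum_n a n <= sum_n b n.
Proof.
  intros H n; induction n as [|n IH].
  - rewrite !sum_O; apply H.
  - rewrite !sum_Sn; unfold plus; simpl. specialize (H (S n)); lra.
Qed.

Lemma sum_n_single (a : nat -> R) k0 : (forall k, k <> k0 -> a k = 0) ->
  forall n, sum_n a n = if Compare_dec.le_dec k0 n then a k0 else 0.
Proof.
  intros H n; induction n as [|n IH].
  - rewrite sum_O. destruct (Compare_dec.le_dec k0 0).
    + assert (k0 = 0%nat) by lia; subst; reflexivity.
    + apply H; lia.
  - rewrite sum_Sn, IH; unfold plus; simpl.
    destruct (Compare_dec.le_dec k0 n); destruct (Compare_dec.le_dec k0 (S n)); try lia.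
    + rewrite (H (S n)); [lra|lia].
    + assert (k0 = S n) by lia; subst; lra.
    + rewrite (H (S n)); [lra|lia].
Qed.

Lemma is_series_single (a : nat -> R) k0 : (forall k, k <> k0 -> a k = 0) ->
  is_series a (a k0).
Proof.
  intros H. assert (L : is_lim_seq (sum_n a) (a k0)).
  2:{ exact L. }
  apply (is_lim_seq_ext_loc (fun _ => a k0)).
  - exists k0; intros n Hn. rewrite (sum_n_single a k0 H n).
    destruct (Compare_dec.le_dec k0 n); [reflexivity|lia].
  - apply is_lim_seq_const.
Qed.

Lemma key_ineq (x a : R) : 0 <= x -> 0 < a ->
  x - a <= (if Req_EM_T x 0 then 0 else x * ln (x / a)) /\
  (x <> a -> x - a < (if Req_EM_T x 0 then 0 else x * ln (x / a))).
Proof.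
  intros Hx Ha. destruct (Req_EM_T x 0) as [E|E].
  - subst; split; intros; lra.
  - assert (Hx' : 0 < x) by lra.
    assert (Hxa : 0 < x / a) by (apply Rdiv_lt_0_compat; lra).
    set (u := ln (x / a)).
    assert (Eu : exp u = x / a) by (apply exp_ln; lra).
    assert (Hm : exp (- u) = a / x).
    { rewrite exp_Ropp, Eu. field. split; lra. }
    assert (Hle : 1 - u <= a / x).
    { destruct (Req_dec u 0) as [U|U].
      - rewrite <- Hm, U. rewrite Ropp_0, exp_0. lra.
      - left. rewrite <- Hm. replace (1 - u) with (1 + - u) by ring. apply exp_ineq1. lra. }
    split.
    + assert (x * (1 - u) <= x * (a / x)) by (apply Rmult_le_compat_l; lra).
      replace (x * (a / x)) with a in H by (field; lra). nra.
    + intros Hne.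
      assert (U : u <> 0).
      { intros U. rewrite U, exp_0 in Eu. apply Hne.
        assert (x = a * (x / a)) by (field; lra). rewrite H, <- Eu; ring. }
      assert (Hlt : 1 - u < a / x).
      { rewrite <- Hm. replace (1 - u) with (1 + - u) by ring. apply exp_ineq1. lra. }
      assert (x * (1 - u) < x * (a / x)) by (apply Rmult_lt_compat_l; lra).
      replace (x * (a / x)) with a in H by (field; lra). nra.
Qed.

Lemma is_series_single' (a : nat -> R) k0 v : (forall k, k <> k0 -> a k = 0) -> a k0 = v ->
  is_series a v.
Proof. intros H E; subst v; apply is_series_single; auto. Qed.

Lemma qt_pos q Rr : (forall l, (1 <= l)%nat -> 0 < q l) -> 0 < Rr -> forall l, (1 <= l)%nat -> 0 < qt q Rr l.
Proof. intros H HR l Hl. unfold qt. apply Rmult_lt_0_compat; [auto| apply pow_lt; auto]. Qed.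

Lemma ser_lim (a : nat -> R) l : is_series a l -> is_lim_seq (sum_n a) l.
Proof. intros H; exact H. Qed.

Lemma lim_ser (a : nat -> R) l : is_lim_seq (sum_n a) (Finite l) -> is_series a l.
Proof. intros H; exact H. Qed.

Lemma ft1_fin q Rr : (forall l, (1 <= l)%nat -> 0 < q l) -> 0 < Rr ->
  Rbar_le (ft1 q Rr) 1 ->
  exists F, is_series (fun k => qt q Rr (S k)) F /\ F <= 1 /\ ft1 q Rr = Finite F.
Proof.
  intros Hq HR Hle.
  set (u := fun n => sum_n (fun k => qt q Rr (S k)) n).
  assert (Hinc : forall n, u n <= u (S n)).
  { intros n; unfold u; rewrite sum_Sn; unfold plus; simpl.
    assert (0 < qt q Rr (S (S n))) by (apply qt_pos; auto; lia). lra. }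
  assert (Hc := Lim_seq_correct u (ex_lim_seq_incr u Hinc)).
  assert (H0 : Rbar_le (Lim_seq (fun _ => 0)) (Lim_seq u)).
  { apply Lim_seq_le_loc. exists 0%nat; intros n _.
    clear -Hq HR. unfold u. induction n.
    - rewrite sum_O. left; apply qt_pos; auto; lia.
    - rewrite sum_Sn; unfold plus; simpl. assert (0 < qt q Rr (S (S n))) by (apply qt_pos; auto; lia). lra. }
  rewrite Lim_seq_const in H0.
  unfold ft1 in *. fold u in Hle |- *.
  destruct (Lim_seq u) as [F| |] eqn:E; simpl in *; try contradiction.
  exists F; split; [apply lim_ser; exact Hc| split; auto].
Qed.

Lemma Npos z rs : inX0p z -> rho z = rs -> 0 < rs ->
  0 < Nz z /\ is_series (fun k => z (S k)) (Nz z).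
Proof.
  intros [[Hz0 Hex] Hnn] Hr Hrs.
  assert (Hex' : ex_series (fun k => z (S k))).
  { apply (@ex_series_le R_AbsRing R_CompleteNormedModule _ _) with (2 := Hex). intros n. change (norm (z (S n))) with (Rabs (z (S n))).
    rewrite (Rabs_pos_eq (z (S n))) by auto. pose proof (Hnn (S n)).
    rewrite S_INR. pose proof (pos_INR n). nra. }
  split; [|apply Series_correct; auto].
  destruct (Rle_or_lt (Nz z) 0) as [Hle|]; auto. exfalso.
  assert (Hall : forall k, z (S k) = 0).
  { intros k. set (a := fun j => if Nat.eq_dec j k then z (S k) else 0).
    assert (Ha : Series a = z (S k)).
    { apply is_series_unique. assert (Ak : a k = z (S k)) by (unfold a; destruct (Nat.eq_dec k k); congruence). rewrite <- Ak.
      apply is_series_single. intros j Hj; unfold a; destruct (Nat.eq_dec j k); congruence. }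
    assert (Series a <= Nz z).
    { apply Series_le; auto. intros n; unfold a; destruct (Nat.eq_dec n k); subst; split; auto; lra. }
    pose proof (Hnn (S k)). lra. }
  assert (rho z = 0).
  { unfold rho. apply is_series_unique. apply (is_series_ext (fun _ => 0)).
    - intros n; simpl; rewrite Hall; ring.
    - exact (is_series_single (fun _ => 0) 0%nat (fun _ _ => eq_refl)). }
  lra.
Qed.

Lemma term_ge q Rr z l : (forall l, (1 <= l)%nat -> 0 < q l) -> 0 < Rr -> inX0p z -> 0 < Nz z -> (1 <= l)%nat ->
  z l - qt q Rr l * Nz z <= Aterm q Rr z l /\
  (z l <> qt q Rr l * Nz z -> z l - qt q Rr l * Nz z < Aterm q Rr z l).
Proof.
  intros Hq HR [_ Hnn] HN Hl. unfold Aterm.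
  apply key_ineq; auto. apply Rmult_lt_0_compat; auto. apply qt_pos; auto.
Qed.

Lemma lb q Rr z F k0 : (forall l, (1 <= l)%nat -> 0 < q l) -> 0 < Rr -> inX0p z -> 0 < Nz z ->
  is_series (fun k => z (S k)) (Nz z) -> is_series (fun k => qt q Rr (S k)) F ->
  Rbar_le (Finite (Nz z - F * Nz z + (Aterm q Rr z (S k0) - (z (S k0) - qt q Rr (S k0) * Nz z))))
          (Atilde q Rr z).
Proof.
  intros Hq HR Hz HN Hzs HF.
  set (N := Nz z) in *.
  set (d := Aterm q Rr z (S k0) - (z (S k0) - qt q Rr (S k0) * N)).
  set (b := fun k => (z (S k) - qt q Rr (S k) * N) + (if Nat.eq_dec k k0 then d else 0)).
  assert (Hb : is_series b (N - F * N + d)).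
  { assert (H1 := is_series_scal N _ _ HF).
    assert (H2 := is_series_minus _ _ _ _ Hzs H1).
    assert (H3 : is_series (fun k => if Nat.eq_dec k k0 then d else 0) d).
    { apply (is_series_single' _ k0).
      - intros k Hk; destruct (Nat.eq_dec k k0); congruence.
      - destruct (Nat.eq_dec k0 k0); congruence. }
    assert (H4 := is_series_plus _ _ _ _ H2 H3).
    apply (is_series_ext _ _ _ (fun n => eq_refl)) in H4.
    unfold b. revert H4. unfold plus, opp, scal; simpl. unfold mult; simpl.
    intro H4. eapply is_series_ext; [|replace (N - F * N + d) with (N + - (N * F) + d) by ring; exact H4].
    intros n; simpl. ring. }
  unfold Atilde. rewrite <- (is_lim_seq_unique _ _ (ser_lim _ _ Hb)).
  apply Lim_seq_le_loc. exists 0%nat; intros n _. apply sum_n_le_R.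
  intros k. unfold b. destruct (Nat.eq_dec k k0).
  - subst; unfold d; lra.
  - destruct (term_ge q Rr z (S k) Hq HR Hz HN) as [H _]; [lia|]. fold N in H. lra.
Qed.

Lemma single_z q Rr rs m : (forall l, (1 <= l)%nat -> 0 < q l) -> 0 < Rr -> 0 < rs ->
  let z := fun l => if Nat.eq_dec l (S m) then rs / INR (S m) else 0 in
  inX0p z /\ rho z = rs /\ Atilde q Rr z = Finite (rs / INR (S m) * ln (/ qt q Rr (S m))).
Proof.
  intros Hq HR Hrs z.
  assert (HS : 0 < INR (S m)) by (apply lt_0_INR; lia).
  assert (Hv : 0 < rs / INR (S m)) by (apply Rdiv_lt_0_compat; auto).
  assert (Hzm : z (S m) = rs / INR (S m)) by (unfold z; destruct (Nat.eq_dec (S m) (S m)); congruence).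
  assert (Hz0 : forall k, k <> m -> z (S k) = 0) by (intros k Hk; unfold z; destruct (Nat.eq_dec (S k) (S m)); [lia|auto]).
  assert (HN : Nz z = rs / INR (S m)).
  { unfold Nz. apply is_series_unique. apply (is_series_single' _ m); auto. }
  split; [split; [split|]|split].
  - unfold z; destruct (Nat.eq_dec 0 (S m)); [lia|auto].
  - exists (INR (S m) * Rabs (rs / INR (S m))). apply (is_series_single' _ m).
    + intros k Hk; simpl. rewrite Hz0 by auto. rewrite Rabs_R0; ring.
    + rewrite Hzm; reflexivity.
  - intros l; unfold z; destruct (Nat.eq_dec l (S m)); lra.
  - unfold rho. apply is_series_unique. apply (is_series_single' _ m).
    + intros k Hk; simpl. rewrite Hz0 by auto. ring.
    + rewrite Hzm. field. lra.
  - unfold Atilde. apply is_lim_seq_unique. apply ser_lim. apply (is_series_single' _ m).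
    + intros k Hk; unfold Aterm. rewrite Hz0 by auto. destruct (Req_EM_T 0 0); [auto|lra].
    + unfold Aterm. rewrite Hzm, HN. destruct (Req_EM_T (rs / INR (S m)) 0); [lra|].
      f_equal. f_equal. assert (0 < qt q Rr (S m)) by (apply qt_pos; auto; lia). field. split; lra.
Qed.

Lemma growth q Rr rs eps : (forall l, (1 <= l)%nat -> 0 < q l) -> 0 < Rr ->
  is_lim_seq (fun l => q l / q (S l)) Rr -> 0 < rs -> 0 < eps ->
  exists m, rs / INR (S m) * ln (/ qt q Rr (S m)) < eps.
Proof.
  intros Hq HR Hlim Hrs He.
  set (d := eps / (2 * rs)).
  assert (Hd : 0 < d) by (unfold d; apply Rdiv_lt_0_compat; lra).
  assert (Hed : 1 < exp d) by (pose proof (exp_ineq1 d); lra).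
  assert (He' : 0 < Rr * (exp d - 1)) by (apply Rmult_lt_0_compat; lra).
  apply is_lim_seq_spec in Hlim. destruct (Hlim (mkposreal _ He')) as [M HM]. simpl in HM.
  assert (Hstep : forall l, (S M <= l)%nat -> qt q Rr l * exp (- d) <= qt q Rr (S l)).
  { intros l Hl. specialize (HM l ltac:(lia)).
    apply Rabs_lt_between in HM. destruct HM as [_ HM].
    assert (ql : 0 < q l) by (apply Hq; lia). assert (qSl : 0 < q (S l)) by (apply Hq; lia).
    assert (H1 : q l < Rr * exp d * q (S l)).
    { assert (q l / q (S l) * q (S l) < Rr * exp d * q (S l)) by (apply Rmult_lt_compat_r; lra).
      replace (q l / q (S l) * q (S l)) with (q l) in H by (field; lra). auto. }
    unfold qt. simpl. assert (Hp : 0 < Rr ^ l) by (apply pow_lt; auto).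
    assert (Hem : exp (- d) * exp d = 1) by (rewrite <- exp_plus; replace (-d + d) with 0 by ring; apply exp_0).
    assert (0 < exp (- d)) by apply exp_pos.
    assert (q l * exp (-d) <= Rr * q (S l)).
    { assert (q l * exp (-d) < Rr * exp d * q (S l) * exp (-d)) by (apply Rmult_lt_compat_r; lra).
      replace (Rr * exp d * q (S l) * exp (- d)) with (Rr * q (S l) * (exp (-d) * exp d)) in H0 by ring.
      rewrite Hem in H0. lra. }
    assert (q l * exp (- d) * Rr ^ l <= Rr * q (S l) * Rr ^ l) by (apply Rmult_le_compat_r; lra).
    nra. }
  set (B := S M).
  assert (HB : 0 < qt q Rr B) by (apply qt_pos; auto; unfold B; lia).
  assert (Hind : forall n, qt q Rr B * exp (- d * INR n) <= qt q Rr (B + n)).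
  { induction n as [|n IH].
    - rewrite Nat.add_0_r. change (INR 0) with 0. rewrite Rmult_0_r, exp_0. lra.
    - rewrite Nat.add_succ_r. eapply Rle_trans; [|apply Hstep; unfold B; lia].
      rewrite S_INR. replace (- d * (INR n + 1)) with (- d * INR n + - d) by ring.
      rewrite exp_plus. rewrite <- Rmult_assoc. apply Rmult_le_compat_r; [left; apply exp_pos| auto]. }
  set (C := Rabs (ln (qt q Rr B))).
  destruct (INR_archimed 1 (2 * rs * C / eps)) as [n Hn]; [lra|]. rewrite Rmult_1_r in Hn.
  exists (B + n - 1)%nat. replace (S (B + n - 1)) with (B + n)%nat by (unfold B; lia).
  assert (HL : 0 < qt q Rr (B + n)) by (apply qt_pos; auto; unfold B; lia).
  assert (Hln : ln (/ qt q Rr (B + n)) <= C + d * INR n).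
  { rewrite ln_Rinv by auto.
    assert (ln (qt q Rr B * exp (- d * INR n)) <= ln (qt q Rr (B + n))).
    { apply ln_le; auto. apply Rmult_lt_0_compat; auto; apply exp_pos. }
    rewrite ln_mult, ln_exp in H by (auto; apply exp_pos).
    unfold C. pose proof (Rle_abs (- ln (qt q Rr B))). rewrite Rabs_Ropp in H0. lra. }
  assert (HnL : INR n <= INR (B + n)) by (apply le_INR; lia).
  assert (HLp : 0 < INR (B + n)) by (apply lt_0_INR; unfold B; lia).
  assert (HC : 0 <= C) by apply Rabs_pos.
  assert (Hv : 0 < rs / INR (B + n)) by (apply Rdiv_lt_0_compat; auto).
  apply Rle_lt_trans with (rs / INR (B + n) * (C + d * INR n)).
  { apply Rmult_le_compat_l; lra. }
  assert (E1 : rs / INR (B + n) * (C + d * INR n) = rs * C / INR (B + n) + (eps / 2) * (INR n / INR (B + n))).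
  { unfold d. field. split; lra. }
  rewrite E1.
  assert (INR n / INR (B + n) <= 1).
  { apply Rmult_le_reg_r with (INR (B + n)); auto. unfold Rdiv. rewrite Rmult_assoc, Rinv_l by lra. lra. }
  assert (rs * C / INR (B + n) < eps / 2).
  { apply Rmult_lt_reg_r with (INR (B + n)); auto. unfold Rdiv. rewrite Rmult_assoc, Rinv_l by lra.
    assert (2 * rs * C < eps * INR n).
    { assert (2 * rs * C / eps * eps < INR n * eps) by (apply Rmult_lt_compat_r; lra).
      replace (2 * rs * C / eps * eps) with (2 * rs * C) in H0 by (field; lra). lra. }
    nra. }
  nra.
Qed.

Theorem theorem9 (q : nat -> R) (Rr : R) (rhostar : R)
  (hqpos : forall l : nat, (1 <= l)%nat -> 0 < q l)
  (hq1 : q 1%nat = 1)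
  (hRpos : 0 < Rr)
  (hRlim : is_lim_seq (fun l => q l / q (S l)) Rr)
  (hNEQ : Rbar_lt (ft1 q Rr) 1 \/ (ft1 q Rr = Finite 1 /\ gt1 q Rr = p_infty))
  (hrho : 0 < rhostar) :
  (* 0 is a lower bound of the set {Atilde z : z in X_{0+}, rho z = rhostar} *)
  (forall z, inX0p z -> rho z = rhostar -> Rbar_le (Finite 0) (Atilde q Rr z)) /\
  (* ... and it is the greatest lower bound *)
  (forall eps : R, 0 < eps ->
     exists z, inX0p z /\ rho z = rhostar /\ Rbar_lt (Atilde q Rr z) (Finite eps)) /\
  (* the infimum 0 is not attained *)
  (forall z, inX0p z -> rho z = rhostar -> Atilde q Rr z <> Finite 0).
Proof.
  assert (Hle : Rbar_le (ft1 q Rr) 1).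
  { destruct hNEQ as [H|[H _]]; [apply Rbar_lt_le; auto| rewrite H; simpl; lra]. }
  destruct (ft1_fin q Rr hqpos hRpos Hle) as [F [HF [HF1 HFe]]].
  split; [|split].
  - intros z Hz Hr. destruct (Npos z rhostar Hz Hr hrho) as [HN Hzs].
    pose proof (lb q Rr z F 0 hqpos hRpos Hz HN Hzs HF) as H.
    destruct (term_ge q Rr z 1 hqpos hRpos Hz HN ltac:(lia)) as [T _].
    eapply Rbar_le_trans; [|exact H]. simpl. nra.
  - intros eps He. destruct (growth q Rr rhostar eps hqpos hRpos hRlim hrho He) as [m Hm].
    destruct (single_z q Rr rhostar m hqpos hRpos hrho) as [Hz [Hr HA]].
    eexists; split; [exact Hz|split; [exact Hr|]]. rewrite HA. simpl. exact Hm.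
  - intros z Hz Hr HA. destruct (Npos z rhostar Hz Hr hrho) as [HN Hzs].
    destruct hNEQ as [Hlt|[H1 Hg]].
    + rewrite HFe in Hlt. simpl in Hlt.
      pose proof (lb q Rr z F 0 hqpos hRpos Hz HN Hzs HF) as H.
      destruct (term_ge q Rr z 1 hqpos hRpos Hz HN ltac:(lia)) as [T _].
      rewrite HA in H. simpl in H. nra.
    + rewrite HFe in H1. injection H1 as H1. subst F.
      destruct (classic (exists k0, z (S k0) <> qt q Rr (S k0) * Nz z)) as [[k0 Hk0]|Hno].
      * pose proof (lb q Rr z 1 k0 hqpos hRpos Hz HN Hzs HF) as H.
        destruct (term_ge q Rr z (S k0) hqpos hRpos Hz HN ltac:(lia)) as [_ T].
        specialize (T Hk0). rewrite HA in H. simpl in H. nra.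
      * assert (Heq : forall k, z (S k) = qt q Rr (S k) * Nz z).
        { intros k. apply NNPP. intros C. apply Hno. exists k; auto. }
        destruct Hz as [[Hz0 Hex] Hnn].
        assert (Hs : is_series (fun k => INR (S k) * z (S k)) (rho z)).
        { apply Series_correct. eapply ex_series_ext; [|exact Hex].
          intros n; simpl. rewrite Rabs_pos_eq by auto. reflexivity. }
        assert (Hs2 := is_series_scal (/ Nz z) _ _ Hs).
        assert (Hs3 : is_series (fun k => INR (S k) * qt q Rr (S k)) (/ Nz z * rho z)).
        { eapply is_series_ext; [|exact Hs2]. intros n. unfold scal; simpl; unfold mult; simpl.
          rewrite Heq. field. lra. }
        unfold gt1 in Hg. rewrite (is_lim_seq_unique (fun n => sum_n (fun k => INR (S k) * qt q Rr (S k)) n) _ (ser_lim _ _ Hs3)) in Hg. discriminate.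
Qed.
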